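(* Consider any sequences evolved by Algorithm 2, let $d_0:=\|x^0-x^*\|>0$ and $C:=\lambda_1^{\frac{p-1}{p+1}}\theta^{\frac{2}{p+1}}(1-\sigma^2)^{\frac{p-1}{p+1}}$. Then for all $k\ge0$, $A_{k+1}\ge\lambda_1\Big(1+\frac{2\mu C}{d_0^{2(p-1)/(p+1)}}\,k^{\frac{p-1}{p+1}}\Big)^k$.
   Context: Setting: $\mathcal H$ is a finite-dimensional real inner product space with inner product $\langle\cdot,\cdot\rangle$ and norm $\|\cdot\|$. $f,g:\mathcal H\to(-\infty,\infty]$ are proper, closed, convex functions, $h:=f+g$ has nonempty domain, and $g$ is $\mu$-strongly convex for some $\mu>0$, i.e. $g(tx+(1-t)y)\le tg(x)+(1-t)g(y)-\frac{\mu}{2}t(1-t)\|x-y\|^2$ for all $x,y\in\mathcal H$, $t\in[0,1]$. $x^*$ denotes the unique minimizer of $h$. For $\varepsilon\ge 0$, $\partial_\varepsilon f(y):=\{u\in\mathcal H: f(w)\ge f(y)+\langle u,w-y\rangle-\varepsilon\ \forall w\in\mathcal H\}$, and $\partial g:=\partial_0 g$. Algorithm 2: Choose $x^0,y^0\in\mathcal H$, $\sigma\in[0,1)$, $p\ge2$ and $\theta>0$, and set $A_0=0$. For $k=0,1,2,\dots$: choose $\lambda_{k+1}>0$, set $a_{k+1}=\frac{(1+2\mu A_k)\lambda_{k+1}+\sqrt{(1+2\mu A_k)^2\lambda_{k+1}^2+4(1+\mu A_k)A_k\lambda_{k+1}}}{2}$ and $\tilde x^k=\frac{a_{k+1}-\mu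 A_k\lambda_{k+1}}{A_k+a_{k+1}}x^k+\frac{A_k+\mu A_k\lambda_{k+1}}{A_k+a_{k+1}}y^k$; compute $(y^{k+1},v^{k+1},\varepsilon_{k+1})\in\mathcal H\times\mathcal H\times[0,\infty)$ such that $v^{k+1}\in\partial_{\varepsilon_{k+1}}f(y^{k+1})+\partial g(y^{k+1})$, $\frac{\|\lambda_{k+1}v^{k+1}+y^{k+1}-\tilde x^k\|^2}{1+\lambda_{k+1}\mu}+2\lambda_{k+1}\varepsilon_{k+1}\le\sigma^2\|y^{k+1}-\tilde x^k\|^2$, and $\lambda_{k+1}\|y^{k+1}-\tilde x^k\|^{p-1}\ge\theta$; then set $A_{k+1}=A_k+a_{k+1}$ and $x^{k+1}=\frac{1+\mu A_k}{1+\mu A_{k+1}}x^k+\frac{\mu a_{k+1}}{1+\mu A_{k+1}}y^{k+1}-\frac{a_{k+1}}{1+\mu A_{k+1}}v^{k+1}$. ''Sequences evolved by Algorithm 2'' means any sequences satisfying all these relations for every $k\ge 0$. *)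

(* Defs.v *)
From HB Require Import structures.
From mathcomp Require Import all_boot all_order all_algebra.
From mathcomp Require Import all_classical all_reals all_analysis.
Set Implicit Arguments. Unset Strict Implicit. Unset Printing Implicit Defensive.
Import Order.TTheory GRing.Theory Num.Theory.
Import numFieldNormedType.Exports.
Local Open Scope ring_scope.
Local Open Scope ereal_scope.

(* The finite-dimensional real inner product space H is modelled as
   'rV[R]_n with the Euclidean inner product. *)
Definition ip {R : realType} {n : nat} (u v : 'rV[R]_n) : R :=
  \sum_(i < n) u ord0 i * v ord0 i.

Definition nrm {R : realType} {n : nat} (u : 'rV[R]_n) : R :=
  Num.sqrt (ip u u).

Definition proper_fun {R : realType} {n : nat} (f : 'rV[R]_n -> \bar R) : Prop :=
  (forall x, f x != -oo) /\ (exists x, f x \is a fin_num).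

Definition closed_fun {R : realType} {n : nat} (f : 'rV[R]_n -> \bar R) : Prop :=
  lower_semicontinuous f.

Definition convex_fun {R : realType} {n : nat} (f : 'rV[R]_n -> \bar R) : Prop :=
  forall x y (t : R), (0 <= t <= 1)%R ->
    f (t *: x + (1 - t) *: y)%R <= t%:E * f x + (1 - t)%:E * f y.

Definition strongly_convex {R : realType} {n : nat} (mu : R)
    (g : 'rV[R]_n -> \bar R) : Prop :=
  forall x y (t : R), (0 <= t <= 1)%R ->
    g (t *: x + (1 - t) *: y)%R <=
      t%:E * g x + (1 - t)%:E * g y
      - (mu / 2 * t * (1 - t) * nrm (x - y) ^+ 2)%R%:E.

Definition eps_subdiff {R : realType} {n : nat} (eps : R)
    (f : 'rV[R]_n -> \bar R) (y : 'rV[R]_n) (u : 'rV[R]_n) : Prop :=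
  forall w, f w >= f y + (ip u (w - y))%R%:E - eps%:E.

Definition subdiff {R : realType} {n : nat}
    (g : 'rV[R]_n -> \bar R) (y : 'rV[R]_n) (u : 'rV[R]_n) : Prop :=
  eps_subdiff 0 g y u.

Definition algorithm2 {R : realType} {n : nat}
    (f g : 'rV[R]_n -> \bar R) (mu sigma p theta : R)
    (lam A a : nat -> R) (x xt y v : nat -> 'rV[R]_n) (eps : nat -> R) : Prop :=
  (0 <= sigma < 1)%R /\ (2 <= p)%R /\ (0 < theta)%R /\ A 0%N = 0%R /\
  forall k : nat,
    (0 < lam k.+1)%R /\
        a k.+1 = (((1 + 2 * mu * A k) * lam k.+1
                  + Num.sqrt ((1 + 2 * mu * A k) ^+ 2 * lam k.+1 ^+ 2
                              + 4 * (1 + mu * A k) * A k * lam k.+1)) / 2)%R /\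
        xt k = ((a k.+1 - mu * A k * lam k.+1) / (A k + a k.+1) *: x k
               + (A k + mu * A k * lam k.+1) / (A k + a k.+1) *: y k)%R /\
        (exists u1 u2, v k.+1 = (u1 + u2)%R /\
            eps_subdiff (eps k.+1) f (y k.+1) u1 /\ subdiff g (y k.+1) u2) /\
        (0 <= eps k.+1)%R /\
        (nrm (lam k.+1 *: v k.+1 + y k.+1 - xt k) ^+ 2 / (1 + lam k.+1 * mu)
           + 2 * lam k.+1 * eps k.+1 <= sigma ^+ 2 * nrm (y k.+1 - xt k) ^+ 2)%R /\
        (lam k.+1 * (nrm (y k.+1 - xt k)) `^ (p - 1) >= theta)%R /\
        A k.+1 = (A k + a k.+1)%R /\
        x k.+1 = ((1 + mu * A k) / (1 + mu * A k.+1) *: x k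
                 + (mu * a k.+1) / (1 + mu * A k.+1) *: y k.+1
                 - a k.+1 / (1 + mu * A k.+1) *: v k.+1)%R.

(* Main.v *)
Require Import Defs.
From HB Require Import structures.
From mathcomp Require Import all_boot all_order all_algebra.
From mathcomp Require Import all_classical all_reals all_analysis.
From mathcomp Require Import ring lra.
Import Order.TTheory GRing.Theory Num.Theory.
Local Open Scope ring_scope.
Set Implicit Arguments.

Section Vec.
Variables (R : realType) (n : nat).
Implicit Types u w : 'rV[R]_n.

Lemma ip_ge0 u : 0 <= ip u u.
Proof. by apply: sumr_ge0 => i _; rewrite -expr2 sqr_ge0. Qed.

Lemma nrm2 u : nrm u ^+ 2 = ip u u.
Proof. by rewrite /nrm sqr_sqrtr // ip_ge0. Qed.

Lemma nrm_ge0 u : 0 <= nrm u.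
Proof. exact: sqrtr_ge0. Qed.

Lemma ipDl u1 u2 w : ip (u1 + u2) w = ip u1 w + ip u2 w.
Proof. by rewrite /ip -big_split; apply: eq_bigr => i _; rewrite mxE mulrDl. Qed.

Lemma core (A a lam mu : R) (x yk yp v xs : 'rV[R]_n) :
  0 < lam -> 0 < mu -> 0 <= A -> 0 < a ->
  a ^+ 2 = lam * ((1 + 2*mu*A) * a + (1+mu*A)*A) ->
  forall xt xn : 'rV[R]_n,
  xt = ((a - mu*A*lam)/(A+a)) *: x + ((A + mu*A*lam)/(A+a)) *: yk ->
  xn = ((1+mu*A)/(1+mu*(A+a))) *: x + (mu*a/(1+mu*(A+a))) *: yp - (a/(1+mu*(A+a))) *: v ->
  (1+mu*(A+a))/2 * nrm (xn - xs)^+2 + (A+a)/(2*lam) * nrm (yp - xt)^+2 <=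
  (1+mu*A)/2 * nrm (x - xs)^+2 + A * ip v (yk - yp) + a * ip v (xs - yp)
   + (A+a)/(2*lam) * (nrm (lam *: v + yp - xt) ^+2 / (1+lam*mu))
   + A*mu/2 * nrm (yk-yp)^+2 + a*mu/2*nrm(xs-yp)^+2.
Proof.
move=> l0 m0 A0 a0 ha xt xn Ext Exn.
have aB : (1 + 2*mu*A) * lam <= a.
  have : a * ((1 + 2*mu*A) * lam) <= a * a.
    rewrite -expr2 ha.
    have h1 : 0 <= 1 + mu * A by nra.
    have := mulr_ge0 (ltW l0) (mulr_ge0 h1 A0). nra.
  by rewrite ler_pM2l.
set K := mu * (a - mu*A*lam) * (A + mu*A*lam) / (2 * (1 + lam*mu) * (A+a)).
have K0 : 0 <= K.
  have lm : 0 <= lam * mu by apply: mulr_ge0; lra.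
  have mAl : 0 <= mu * A * lam by apply: mulr_ge0; [apply: mulr_ge0|]; lra.
  rewrite /K; apply: divr_ge0; last by apply: mulr_ge0; [apply: mulr_ge0|]; lra.
  apply: mulr_ge0; last by lra.
  apply: mulr_ge0; first lra.
  have : mu * A * lam <= (1 + 2 * mu * A) * lam.
    rewrite ler_pM2r //. have : 0 <= mu * A by apply: mulr_ge0; lra. lra.
  lra.
rewrite -subr_ge0.
have -> : (1+mu*A)/2 * nrm (x - xs)^+2 + A * ip v (yk - yp) + a * ip v (xs - yp)
   + (A+a)/(2*lam) * (nrm (lam *: v + yp - xt) ^+2 / (1+lam*mu))
   + A*mu/2 * nrm (yk-yp)^+2 + a*mu/2*nrm(xs-yp)^+2 -
  ((1+mu*(A+a))/2 * nrm (xn - xs)^+2 + (A+a)/(2*lam) * nrm (yp - xt)^+2)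
  = \sum_(i < n) K * (x ord0 i - yk ord0 i)^+2.
  rewrite !nrm2 /ip.
  rewrite !mulr_sumr !mulr_suml !mulr_sumr -!big_split /= -sumrB.
  apply: eq_bigr => i _; rewrite Ext Exn !mxE /K.
  have D0 : 0 < (1 + 2*mu*A) * a + (1+mu*A)*A.
    have h1 : 0 <= (1+mu*A)*A by apply: mulr_ge0 => //; nra.
    have h2 : 0 < (1 + 2*mu*A) * a by apply: mulr_gt0 => //; nra.
    lra.
  have El : lam = a^+2 / ((1 + 2*mu*A) * a + (1+mu*A)*A).
    by rewrite ha mulfK // gt_eqF.
  move: (x ord0 i) (xs ord0 i) (yk ord0 i) (yp ord0 i) (v ord0 i) => X Xs Yk Yp V.
  move: D0; rewrite El => D0.
  field.
  have h3 : 0 <= a ^+ 2 * mu by apply: mulr_ge0; [apply: sqr_ge0|lra].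
  have h4 : 0 <= mu * (A + a) by apply: mulr_ge0; lra.
  rewrite !gt_eqF //; lra.
by apply: sumr_ge0 => i _; apply: mulr_ge0 => //; apply: sqr_ge0.
Qed.
End Vec.
Section E.
Variables (R : realType) (n : nat).
Implicit Types u w : 'rV[R]_n.

Lemma ipZr u w (t : R) : ip u (t *: w) = t * ip u w.
Proof. by rewrite /ip mulr_sumr; apply: eq_bigr => i _; rewrite mxE; ring. Qed.

Lemma lim_lem (X c : R) : (forall t, 0 < t < 1 -> (1 - t) * c <= X) -> c <= X.
Proof.
move=> H; rewrite leNgt; apply/negP => Xc.
have [c0|c0] := lerP c 0.
  have := H (1/2) ltac:(lra). nra.
pose t := (c - X) / (c - X + c).
have d0 : 0 < c - X + c by lra.
have t0 : 0 < t by apply: divr_gt0; lra.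
have t1 : t < 1 by rewrite /t ltr_pdivrMr //; lra.
have := H t ltac:(lra).
have -> : (1 - t) * c = c * c / (c - X + c).
  rewrite /t; field; lra.
rewrite ler_pdivrMr //; nra.
Qed.

Lemma fin_of_subdiff (h : 'rV[R]_n -> \bar R) e y u w :
  (forall z, h z != -oo)%E -> eps_subdiff e h y u -> h w \is a fin_num ->
  h y \is a fin_num.
Proof.
move=> hn hs hw; have := hs w; move: (hn y).
case: (h y) => [r| |] //= _.
by move: hw; case: (h w).
Qed.

Lemma subdiff_real (h : 'rV[R]_n -> \bar R) e y u w :
  eps_subdiff e h y u -> h w \is a fin_num -> h y \is a fin_num ->
  fine (h y) + ip u (w - y) - e <= fine (h w).
Proof.
move=> hs hw hy; have := hs w.
by rewrite -(fineK hw) -(fineK hy) /= -EFinD lee_fin.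
Qed.

Lemma strong_subgrad (mu : R) (g : 'rV[R]_n -> \bar R) y u w :
  strongly_convex mu g -> subdiff g y u -> g w \is a fin_num -> g y \is a fin_num ->
  fine (g y) + ip u (w - y) + mu / 2 * nrm (w - y) ^+ 2 <= fine (g w).
Proof.
move=> sc hs hw hy.
suff : mu / 2 * nrm (w - y) ^+ 2 <= fine (g w) - fine (g y) - ip u (w - y) by lra.
apply: lim_lem => t /andP[t0 t1].
have h1 := sc w y t ltac:(apply/andP; split; lra).
have h2 := hs (t *: w + (1 - t) *: y).
have E : t *: w + (1 - t) *: y - y = t *: (w - y).
  by apply/rowP => i; rewrite !mxE; ring.
move: h2; rewrite E ipZr sube0 => h2.
have h3 := le_trans h2 h1.
move: h3; rewrite -(fineK hw) -(fineK hy) /= -!EFinM -!EFinD ?EFinB lee_fin => h3.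
have : t * ((1 - t) * (mu / 2 * nrm (w - y) ^+ 2)) <= t * (fine (g w) - fine (g y) - ip u (w - y)).
  lra.
by rewrite ler_pM2l.
Qed.
End E.
Section M.
Variable R : realType.

Lemma agm (k : nat) (E : 'I_k -> R) : (forall i, 0 <= E i) ->
  \prod_i E i <= ((\sum_i E i) / k%:R) ^+ k.
Proof.
move=> E0.
have := (leif_AGM (A := 'I_k) (fun i _ => E0 i)).1.
by rewrite card_ord.
Qed.

Lemma rootk (P : R) (k : nat) : (0 < k)%N -> 0 <= P -> (P `^ (k%:R^-1)) ^+ k = P.
Proof.
move=> k0 P0; rewrite -powR_mulrn ?powR_ge0 // -powRrM mulVf ?powRr1 //.
by rewrite pnatr_eq0 -lt0n.
Qed.

Lemma mahler (k : nat) (X : 'I_k -> R) (g : R) : (0 < k)%N ->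
  (forall i, 0 <= X i) -> 0 <= g -> g ^+ k <= \prod_i X i ->
  (1 + g) ^+ k <= \prod_i (1 + X i).
Proof.
move=> k0 X0 g0 hg.
set P := \prod_i (1 + X i).
have P1 : 0 < P by apply: prodr_gt0 => i _; have := X0 i; lra.
set r := P `^ (k%:R^-1).
have rk : r ^+ k = P by apply: rootk => //; lra.
have r0 : 0 < r by apply: powR_gt0.
have kR : 0 < k%:R :> R by rewrite ltr0n.
set m1 := (\sum_i (1 + X i)^-1) / k%:R.
set m2 := (\sum_i (X i / (1 + X i))) / k%:R.
have m12 : m1 + m2 = 1.
  rewrite /m1 /m2 -mulrDl -big_split /=.
  rewrite (eq_bigr (fun _ => 1)).
    by rewrite sumr_const card_ord mulfV // gt_eqF.
  move=> i _; have := X0 i => h; rewrite -[X in X + _]mul1r -mulrDl mulfV // gt_eqF //; lra.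
have m10 : 0 <= m1.
  by apply: divr_ge0; [apply: sumr_ge0 => i _; rewrite invr_ge0; have := X0 i; lra | lra].
have m20 : 0 <= m2.
  by apply: divr_ge0; [apply: sumr_ge0 => i _; apply: divr_ge0; have := X0 i; lra | lra].
have le1 : r^-1 <= m1.
  have ri : 0 <= r^-1 by rewrite invr_ge0; lra.
  rewrite -(ler_pXn2r k0) ?nnegrE //.
  rewrite exprVn rk /P -prodfV; apply: agm => i; rewrite invr_ge0; have := X0 i; lra.
have le2 : g / r <= m2.
  have ri : 0 <= g / r by apply: divr_ge0; lra.
  rewrite -(ler_pXn2r k0) ?nnegrE //.
  have E0 : forall i, 0 <= X i / (1 + X i) by move=> i; apply: divr_ge0; have := X0 i; lra.
  rewrite /m2; apply: le_trans; last exact: agm E0.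
  rewrite expr_div_n rk /P prodf_div; apply: ler_pM => //.
  - by apply: exprn_ge0.
  - by rewrite invr_ge0; exact: ltW P1.
have : (1 + g) / r <= 1 by rewrite mulrDl mul1r; lra.
rewrite ler_pdivrMr // mul1r => h.
by rewrite -rk; apply: lerXn2r => //; rewrite nnegrE; lra.
Qed.
Lemma powRVx (x r : R) : 0 < x -> (x^-1) `^ r = (x `^ r)^-1.
Proof.
move=> x0; rewrite /powR invr_eq0 gt_eqF // lnV ?posrE // mulrN expRN //.
Qed.

Lemma powR_prod (k : nat) (F : 'I_k -> R) (q : R) : (forall i, 0 <= F i) ->
  (\prod_i F i) `^ q = \prod_i (F i `^ q).
Proof.
elim: k F => [|k IH] F F0; first by rewrite !big_ord0 powR1.
rewrite !big_ord_recr /= powRM ?IH //; last exact: prodr_ge0.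
Qed.

Lemma powR_Xn (x q : R) (k : nat) : 0 <= x -> (x ^+ k) `^ q = (x `^ q) ^+ k.
Proof.
move=> x0; rewrite -powR_mulrn // -powRrM mulrC powRrM powR_mulrn //.
exact: powR_ge0.
Qed.

Lemma powR_inj_le (x y q : R) : 0 < q -> 0 <= x -> 0 <= y -> x `^ q <= y `^ q -> x <= y.
Proof.
move=> q0 x0 y0 h.
have E z : 0 <= z -> z = (z `^ q) `^ q^-1 by move=> z0; rewrite -powRrM mulfV ?gt_eqF // powRr1.
rewrite (E x) // (E y) //; apply: ge0_ler_powR => //; rewrite ?invr_ge0 ?nnegrE ?powR_ge0 //; lra.
Qed.
Lemma final (k : nat) (lam Nn : nat -> R) (mu sigma p theta d0 : R) :
 (0 < k)%N -> 0 < mu -> 0 <= sigma < 1 -> 2 <= p -> 0 < theta -> 0 < d0 ->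
 (forall j, 0 < lam j.+1) -> (forall j, 0 <= Nn j) ->
 (forall j, theta <= lam j.+1 * Nn j.+1 `^ (p - 1)) ->
 \sum_(j < k) lam 1%N / (2 * lam j.+2) * (1 - sigma^+2) * Nn j.+2 ^+ 2 <= d0 ^+ 2 / 2 ->
 (1 + 2 * mu * (lam 1%N `^ ((p - 1) / (p + 1)) * theta `^ (2 / (p + 1))
           * (1 - sigma ^+ 2) `^ ((p - 1) / (p + 1))) / d0 `^ (2 * (p - 1) / (p + 1))
    * k%:R `^ ((p - 1) / (p + 1))) ^+ k <= \prod_(j < k) (1 + 2 * mu * lam j.+2).
Proof.
move=> k0 m0 /andP[s0 s1] p2 t0 d00 l0 N0 hth hsum.
set q := (p + 1) / (p - 1).
set r := 2 / (p - 1).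
have p1 : 0 < p - 1 by lra.
have q0 : 0 < q by apply: divr_gt0; lra.
have r0 : 0 < r by apply: divr_gt0; lra.
have qr : q = r + 1 by rewrite /q /r; field; lra.
have ss : 0 < 1 - sigma ^+ 2 by nra.
set s := fun j : 'I_k => (lam j.+2 `^ q)^-1.
have sg0 : forall j, 0 < s j by move=> j; rewrite /s invr_gt0 powR_gt0.
have st1 : forall j : 'I_k, theta `^ r * s j <= Nn j.+2 ^+ 2 / lam j.+2.
  move=> j; have lj := l0 j.+1.
  have h1 : theta / lam j.+2 <= Nn j.+2 `^ (p - 1).
    by rewrite ler_pdivrMr // mulrC hth.
  have h2 : (theta / lam j.+2) `^ r <= Nn j.+2 ^+ 2.
    have -> : Nn j.+2 ^+ 2 = (Nn j.+2 `^ (p-1)) `^ r.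
      rewrite -powRrM; have -> : (p - 1) * r = 2%:R by rewrite /r; field; lra.
      by rewrite powR_mulrn.
    apply: ge0_ler_powR; rewrite ?nnegrE ?powR_ge0 //; first lra.
    by apply: divr_ge0; lra.
  have -> : theta `^ r * s j = (theta / lam j.+2) `^ r / lam j.+2.
    have e1 : lam j.+2 `^ q = lam j.+2 `^ r * lam j.+2.
      rewrite qr powRD; last by apply/implyP => _; rewrite gt_eqF.
      by rewrite powRr1 // ltW.
    rewrite /s e1 powRM; last 2 first.
    - exact: ltW.
    - by rewrite invr_ge0 ltW.
    by rewrite powRVx // invfM mulrA.
  by apply: ler_wpM2r => //; rewrite invr_ge0 ltW.
have l1 := l0 0%N.
have tr : 0 < theta `^ r by apply: powR_gt0.
set D := d0 ^+ 2 / (theta `^ r * lam 1%N * (1 - sigma ^+ 2)).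
have D0 : 0 < D by apply: divr_gt0; [apply: exprn_gt0 | apply: mulr_gt0; [apply: mulr_gt0|]].
have st2 : \sum_j s j <= D.
  have h : \sum_j (theta `^ r * lam 1%N * (1 - sigma ^+ 2) / 2) * s j <= d0 ^+ 2 / 2.
    apply: le_trans hsum; apply: ler_sum => j _.
    have := st1 j; have lj := l0 j.+1.
    have -> : lam 1%N / (2 * lam j.+2) * (1 - sigma ^+ 2) * Nn j.+2 ^+ 2 =
       (lam 1%N * (1 - sigma ^+ 2) / 2) * (Nn j.+2 ^+ 2 / lam j.+2).
      by field; rewrite gt_eqF.
    have -> : theta `^ r * lam 1%N * (1 - sigma ^+ 2) / 2 * s j =
       (lam 1%N * (1 - sigma ^+ 2) / 2) * (theta `^ r * s j) by ring.
    move=> hh; apply: ler_wpM2l => //; apply: divr_ge0; [apply: mulr_ge0|]; lra.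
  move: h; rewrite -mulr_sumr /D => h.
  have c0 : 0 < theta `^ r * lam 1%N * (1 - sigma ^+ 2) by apply: mulr_gt0; [apply: mulr_gt0|].
  rewrite ler_pdivlMr // mulrC.
  have : (theta `^ r * lam 1%N * (1 - sigma ^+ 2)) * \sum_j s j <= d0 ^+ 2 by lra.
  done.
have kR : 0 < k%:R :> R by rewrite ltr0n.
have st3 : \prod_j s j <= (D / k%:R) ^+ k.
  apply: le_trans; first exact: agm (fun j => ltW (sg0 j)).
  apply: lerXn2r; rewrite ?nnegrE.
  - by apply: divr_ge0; [apply: sumr_ge0 => j _; apply: ltW|apply: ltW].
  - by apply: divr_ge0; apply: ltW.
  - by apply: ler_wpM2r => //; rewrite invr_ge0 ltW.
have st4 : (k%:R / D) ^+ k <= (\prod_(j < k) lam j.+2) `^ q.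
  rewrite powR_prod; last by move=> j; apply: ltW.
  have -> : \prod_(j < k) lam j.+2 `^ q = (\prod_j s j)^-1.
    by rewrite /s prodfV invrK.
  rewrite -[k%:R / D]invf_div.
  rewrite exprVn lef_pV2 ?posrE //; first by apply: exprn_gt0; apply: divr_gt0.
  by apply: prodr_gt0 => j _.
set C := lam 1%N `^ ((p - 1) / (p + 1)) * theta `^ (2 / (p + 1)) * (1 - sigma ^+ 2) `^ ((p - 1) / (p + 1)).
set G := C / d0 `^ (2 * (p - 1) / (p + 1)) * k%:R `^ ((p - 1) / (p + 1)).
have C0 : 0 <= C by rewrite /C; apply: mulr_ge0; [apply: mulr_ge0|]; apply: powR_ge0.
have G0 : 0 <= G by rewrite /G; apply: mulr_ge0; [apply: divr_ge0 => //; apply: powR_ge0 | apply: powR_ge0].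
have Gq : G `^ q = k%:R / D.
  have pp : 0 < p + 1 by lra.
  have E1 : (p - 1) / (p + 1) * q = 1 by rewrite /q; field; apply/andP; split; rewrite gt_eqF.
  have E2 : 2 / (p + 1) * q = r by rewrite /q /r; field; apply/andP; split; rewrite gt_eqF.
  have E3 : 2 * (p - 1) / (p + 1) * q = 2%:R by rewrite /q; field; apply/andP; split; rewrite gt_eqF.
  have P1 x : 0 <= x -> (x `^ ((p - 1) / (p + 1))) `^ q = x by move=> x0; rewrite -powRrM E1 powRr1.
  have dd : 0 < d0 `^ (2 * (p - 1) / (p + 1)) by apply: powR_gt0.
  rewrite /G /C powRM; last 2 first.
  - by apply: divr_ge0 => //; apply: ltW.
  - exact: powR_ge0.
  rewrite powRM; last 2 first.
  - exact: C0.
  - by rewrite invr_ge0 ltW.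
  rewrite powRVx // powRM; last 2 first.
  - by apply: mulr_ge0; apply: powR_ge0.
  - exact: powR_ge0.
  rewrite powRM; last 2 first.
  - exact: powR_ge0.
  - exact: powR_ge0.
  rewrite !P1 ?(ltW l1) ?(ltW ss) ?(ltW kR) //.
  rewrite -powRrM E2 -powRrM E3 powR_mulrn ?(ltW d00) //.
  rewrite /D; field.
  by apply/and4P; split; rewrite gt_eqF.
have st5 : G ^+ k <= \prod_(j < k) lam j.+2.
  apply: (powR_inj_le _ _ _ q0) => //; first exact: exprn_ge0.
    by apply: prodr_ge0 => j _; apply: ltW.
  by rewrite powR_Xn // Gq.
have -> : 2 * mu * C / d0 `^ (2 * (p - 1) / (p + 1)) * k%:R `^ ((p - 1) / (p + 1)) = 2 * mu * G.
  by rewrite /G !mulrA.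
apply: mahler => //.
- by move=> j; apply: mulr_ge0; [lra| apply: ltW].
- by apply: mulr_ge0 => //; lra.
- rewrite exprMn big_split /= prodr_const card_ord.
  by apply: ler_wpM2l => //; apply: exprn_ge0; lra.
Qed.
End M.
Lemma aprops (R : realType) (A lam mu a : R) : 0 <= A -> 0 < lam -> 0 < mu ->
  a = (((1 + 2 * mu * A) * lam
                  + Num.sqrt ((1 + 2 * mu * A) ^+ 2 * lam ^+ 2
                              + 4 * (1 + mu * A) * A * lam)) / 2) ->
  0 < a /\ a ^+ 2 = lam * ((1 + 2*mu*A) * a + (1+mu*A)*A) /\ (1 + 2*mu*A) * lam <= a.
Proof.
move=> A0 l0 m0 ->.
set B := (1 + 2 * mu * A) * lam.
set arg := (1 + 2 * mu * A) ^+ 2 * lam ^+ 2 + 4 * (1 + mu * A) * A * lam.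
have mA : 0 <= mu * A by apply: mulr_ge0; lra.
have B0 : 0 < B by apply: mulr_gt0 => //; lra.
have c0 : 0 <= 4 * (1 + mu * A) * A * lam.
  apply: mulr_ge0; last lra. apply: mulr_ge0 => //; apply: mulr_ge0; lra.
have arg0 : 0 <= arg by rewrite /arg; have := sqr_ge0 ((1 + 2 * mu * A) * lam); rewrite exprMn; lra.
set s := Num.sqrt arg.
have s0 : 0 <= s by apply: sqrtr_ge0.
have s2 : s ^+ 2 = arg by rewrite sqr_sqrtr.
have sB : B <= s.
  have : B ^+ 2 <= s ^+ 2 by rewrite s2 /arg /B exprMn; lra.
  by rewrite ler_sqr // ?nnegrE; lra.
split; first lra.
split; last lra.
apply/eqP; rewrite -subr_eq0.
have -> : ((B + s) / 2) ^+ 2 - lam * ((1 + 2 * mu * A) * ((B + s) / 2) + (1 + mu * A) * A)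
   = (s ^+ 2 - arg) / 4 by rewrite /B /arg; field.
by rewrite s2 subrr mul0r.
Qed.

Lemma fin2 (R : realType) (e1 e2 e3 : \bar R) : e1 != -oo%E -> e2 != -oo%E -> (e1 + e2 <= e3)%E ->
  e3 \is a fin_num -> e1 \is a fin_num /\ e2 \is a fin_num.
Proof. by case: e1 => [r||]; case: e2 => [r'||]; case: e3 => [r''||]. Qed.

Theorem lemma3p2 (R : realType) (n : nat) (f g : 'rV[R]_n -> \bar R) (mu : R)
  (xstar : 'rV[R]_n) (sigma p theta : R) (lam A a : nat -> R)
  (x xt y v : nat -> 'rV[R]_n) (eps : nat -> R) :
  proper_fun f -> closed_fun f -> convex_fun f ->
  proper_fun g -> closed_fun g -> convex_fun g ->
  (exists z, (f z + g z)%E \is a fin_num) ->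
  0 < mu -> strongly_convex mu g ->
  (forall z, (f xstar + g xstar <= f z + g z)%E) ->
  algorithm2 f g mu sigma p theta lam A a x xt y v eps ->
  0 < nrm (x 0%N - xstar) ->
  let d0 := nrm (x 0%N - xstar) in
  let C := lam 1%N `^ ((p - 1) / (p + 1)) * theta `^ (2 / (p + 1))
           * (1 - sigma ^+ 2) `^ ((p - 1) / (p + 1)) in
  forall k : nat,
    A k.+1 >= lam 1%N * (1 + 2 * mu * C / d0 `^ (2 * (p - 1) / (p + 1))
                              * k%:R `^ ((p - 1) / (p + 1))) ^+ k.
Proof.
move=> pf _ _ pg _ _ [z hz] m0 scg hmin H dpos d0 C k.
case: H => /andP[s0 s1] [p2 [t0 [A0 H]]].
have [fz gz] : f z \is a fin_num /\ g z \is a fin_num by move: hz; rewrite fin_numD => /andP[].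
have fy : forall j, f (y j.+1) \is a fin_num /\ g (y j.+1) \is a fin_num.
  move=> j; have [_ [_ [_ [[u1 [u2 [_ [h1 h2]]]] _]]]] := H j.
  by split; [exact: (fin_of_subdiff _ pf.1 h1 fz) | exact: (fin_of_subdiff _ pg.1 h2 gz)].
have [fxs gxs] := @fin2 R _ _ _ (pf.1 xstar) (pg.1 xstar) (hmin z) hz.
have sub : forall j w, f w \is a fin_num -> g w \is a fin_num ->
   fine (f (y j.+1)) + fine (g (y j.+1)) + ip (v j.+1) (w - y j.+1) - eps j.+1
     + mu / 2 * nrm (w - y j.+1) ^+ 2 <= fine (f w) + fine (g w).
  move=> j w fw gw; have [_ [_ [_ [[u1 [u2 [ev [h1 h2]]]] _]]]] := H j.
  have [fyj gyj] := fy j.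
  have := subdiff_real _ h1 fw fyj; have := strong_subgrad _ scg h2 gw gyj.
  rewrite ev ipDl; lra.
have Ap : forall j, 0 <= A j.
  elim => [|j IH]; first by rewrite A0.
  have [lp [ea [_ [_ [_ [_ [_ [eA _]]]]]]]] := H j.
  have [a0 _] := @aprops R _ _ _ _ IH lp m0 ea.
  rewrite eA; lra.
set hs := fine (f xstar) + fine (g xstar).
pose hy j := fine (f (y j)) + fine (g (y j)).
pose P j := A j * (hy j - hs) + (1 + mu * A j) / 2 * nrm (x j - xstar) ^+ 2.
pose c j := A j.+1 / (2 * lam j.+1) * (1 - sigma ^+ 2) * nrm (y j.+1 - xt j) ^+ 2.
have step : forall j, P j.+1 + c j <= P j.
  move=> j; have [lp [ea [ext [[u1 [u2 [ev [h1 h2]]]] [e0 [hpe [hth [eA exn]]]]]]]] := H j.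
  have [a0 [ha aB]] := @aprops R _ _ _ _ (Ap j) lp m0 ea.
  have Hs := sub j xstar fxs gxs.
  have Hk : A j * (hy j.+1 - hs + ip (v j.+1) (y j - y j.+1) - eps j.+1
               + mu / 2 * nrm (y j - y j.+1) ^+ 2) <= A j * (hy j - hs).
    case E : j => [|j'].
      by rewrite A0 !mul0r.
    have [fyj gyj] := fy j'.
    have := sub j'.+1 (y j'.+1) fyj gyj.
    rewrite -E => hh; apply: ler_wpM2l; first exact: Ap.
    rewrite /hy; lra.
  rewrite eA in exn.
  have cr := core (A j) (a j.+1) (lam j.+1) mu xstar lp m0 (Ap j) a0 ha ext exn.
  have l2 : 0 <= (A j + a j.+1) / (2 * lam j.+1).
    by apply: divr_ge0; [have := Ap j; lra | lra].
  have hp2 := ler_wpM2l l2 hpe.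
  rewrite mulrDr in hp2.
  have e2 : (A j + a j.+1) / (2 * lam j.+1) * (2 * lam j.+1 * eps j.+1) = (A j + a j.+1) * eps j.+1.
    by field; rewrite gt_eqF.
  rewrite e2 in hp2.
  have Hs2 := ler_wpM2l (ltW a0) Hs.
  rewrite /P /c eA /hy /hs.
  move: Hk; rewrite /hy /hs => Hk.
  lra.
have cge : forall j, 0 <= c j.
  move=> j; have [lp _] := H j; rewrite /c; apply: mulr_ge0; last exact: sqr_ge0.
  apply: mulr_ge0; first by apply: divr_ge0; [exact: Ap | lra].
  have : sigma ^+ 2 < 1 by rewrite expr2; nra.
  lra.
have Pge : forall j, 0 <= P j.+1.
  move=> j; have [fyj gyj] := fy j.
  have hm : hs <= hy j.+1.
    have := hmin (y j.+1).
    by rewrite -(fineK fxs) -(fineK gxs) -(fineK fyj) -(fineK gyj) /= -!EFinD lee_fin.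
  rewrite /P; apply: addr_ge0.
    by apply: mulr_ge0; [exact: Ap | lra].
  apply: mulr_ge0; last exact: sqr_ge0.
  have := mulr_ge0 (ltW m0) (Ap j.+1); lra.
have tel : forall k, \sum_(j < k) c j <= P 0%N - P k.
  elim => [|m IH]; first by rewrite big_ord0 subrr.
  rewrite big_ord_recr /=; have := step m; lra.
have P0 : P 0%N = d0 ^+ 2 / 2 by rewrite /P A0 /d0; ring.
have A1 : A 1%N = lam 1%N.
  have [lp [ea [_ [_ [_ [_ [_ [eA _]]]]]]]] := H 0%N.
  rewrite eA A0 add0r ea A0.
  have -> : (1 + 2 * mu * 0) ^+ 2 * lam 1%N ^+ 2 + 4 * (1 + mu * 0) * 0 * lam 1%N = lam 1%N ^+ 2 by ring.
  by rewrite sqrtr_sqr ger0_norm ?(ltW lp) //; field.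
have Amono : forall j, A j * (1 + 2 * mu * lam j.+1) <= A j.+1.
  move=> j; have [lp [ea [_ [_ [_ [_ [_ [eA _]]]]]]]] := H j.
  have [a0 [_ aB]] := @aprops R _ _ _ _ (Ap j) lp m0 ea.
  rewrite eA; have := Ap j; lra.
have Age : forall j, lam 1%N <= A j.+1.
  elim => [|j IH]; first by rewrite A1.
  apply: le_trans (Amono j.+1); have [lp _] := H j.+1.
  have := mulr_ge0 (mulr_ge0 (Ap j.+1) (ltW m0)) (ltW lp); lra.
have prodA : forall k, lam 1%N * \prod_(j < k) (1 + 2 * mu * lam j.+2) <= A k.+1.
  elim => [|m IH]; first by rewrite big_ord0 mulr1 A1.
  rewrite big_ord_recr /= mulrA.
  apply: le_trans (Amono m.+1); apply: ler_wpM2r => //.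
  have [lp _] := H m.+1; have := mulr_ge0 (ltW m0) (ltW lp); lra.
have sb : \sum_(j < k) c j.+1 <= d0 ^+ 2 / 2.
  have := tel k.+1; rewrite big_ord_recl /= P0.
  have := Pge k; have := cge 0%N; lra.
have l1 : 0 < lam 1%N by have [lp _] := H 0%N.
case: k sb => [|k] sb.
  by rewrite expr0 mulr1 A1.
apply: le_trans (prodA k.+1).
apply: ler_wpM2l; first exact: ltW.
apply: (final _ _ lam (fun j => nrm (y j - xt j.-1)) mu sigma p theta d0) => //.
- by rewrite s0 s1.
- by move=> j; have [lp _] := H j.
- by move=> j; exact: nrm_ge0.
- by move=> j; have [_ [_ [_ [_ [_ [_ [hth _]]]]]]] := H j.
- apply: le_trans sb; apply: ler_sum => j _; rewrite /c.
  have [lp _] := H j.+1.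
  have ss2 : sigma ^+ 2 < 1 by rewrite expr2; nra.
  have ss : 0 <= 1 - sigma ^+ 2 by lra.
  apply: ler_wpM2r; first exact: sqr_ge0.
  apply: ler_wpM2r => //.
  apply: ler_wpM2r; first by rewrite invr_ge0; lra.
  exact: Age.
Qed.
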